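(* Let $m\ge2$ be an integer and let $B_m=\mathbb{Z}^m$ with componentwise addition. Define a multiplication by $(n_1,\dots,n_m)(t_1,\dots,t_m)=(w_1,\dots,w_m)$ where, for $1\le i\le m$, \[w_i=n_i+\sum_{k=0}^{i-1}\binom{n_1}{k}t_{i-k}.\] Then $(B_m,+,\cdot)$ is a left brace with $B_m^{(3)}=B_m^{m+1}=\{0\}$ and $B_m^m\neq\{0\}$; $B_m$ is generated as a left brace by $\mathbf{b}=(1,0,\dots,0)$; and for every left brace $A$ with $A^{(3)}=A^{m+1}=\{0\}$ and every $a\in A$ there exists a unique left brace homomorphism $B_m\to A$ mapping $\mathbf{b}$ to $a$, and its image is the subbrace of $A$ generated by $a$.
   Context: A left brace $(A,+,\cdot)$ is a set $A$ with two binary operations such that $(A,+)$ is an abelian group, $(A,\cdot)$ is a group, and $a(b+c)=ab-a+ac$ for all $a,b,c\in A$. In a left brace, $a*b=-a+ab-b$. For subsets $L,M\subseteq A$, $L*M$ is the subgroup of $(A,+)$ generated by $\{l*m\mid l\in L,m\in M\}$. Set $A^{(1)}=A$, $A^{(r+1)}=A^{(r)}*A$, and $A^1=A$, $A^{r+1}=A*A^r$ for $r\ge1$. A subbrace is a subset that is a subgroup of both $(A,+)$ and $(A,\cdot)$; the subbrace generated by an element is the intersection of all subbraces containing it. A left brace homomorphism is a map that is a homomorphism for both operations. Generalised binomial coefficients: for $n\in\mathbb{Z}$ and integer $k\ge0$, $\binom{n}{0}=1$ and $\binom{n}{k}=\frac{n(n-1)\cdots(n-k+1)}{k!}$ for $k>0$.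 *)

(* Defs.v *)
From HB Require Import structures.
From mathcomp Require Import all_boot all_order all_algebra.
Set Implicit Arguments. Unset Strict Implicit. Unset Printing Implicit Defensive.
Import Order.TTheory GRing.Theory Num.Theory.
Local Open Scope ring_scope.

Section Brace.
Variables (A : zmodType) (mul : A -> A -> A).

Definition mul_identity (e : A) : Prop := forall x, mul e x = x /\ mul x e = x.

Definition is_left_brace : Prop :=
  (forall x y z, mul x (mul y z) = mul (mul x y) z) /\
  (exists e, mul_identity e /\ forall x, exists y, mul x y = e /\ mul y x = e) /\
  (forall a b c, mul a (b + c) = mul a b - a + mul a c).

Definition bstar (a b : A) : A := - a + mul a b - b.

Definition add_subgroup (S : A -> Prop) : Prop :=
  S 0 /\ forall x y, S x -> S y -> S (x - y).

Definition star_set (L M : A -> Prop) : A -> Prop :=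
  fun x => forall S, add_subgroup S ->
    (forall l m, L l -> M m -> S (bstar l m)) -> S x.

Definition whole : A -> Prop := fun _ => True.

Fixpoint derived_aux (k : nat) : A -> Prop :=
  if k is k'.+1 then star_set (derived_aux k') whole else whole.
Fixpoint power_aux (k : nat) : A -> Prop :=
  if k is k'.+1 then star_set whole (power_aux k') else whole.

(* A^(r) and A^r for r >= 1:  A^(1) = A^1 = A *)
Definition derived (r : nat) := derived_aux r.-1.
Definition bpower (r : nat) := power_aux r.-1.

Definition is_zero_set (S : A -> Prop) : Prop := forall x, S x <-> x = 0.

Definition mul_subgroup (S : A -> Prop) : Prop :=
  (exists e, mul_identity e /\ S e) /\
  (forall x y, S x -> S y -> S (mul x y)) /\
  (forall x, S x -> exists y, S y /\ mul_identity (mul x y) /\ mul_identity (mul y x)).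

Definition subbrace (S : A -> Prop) : Prop := add_subgroup S /\ mul_subgroup S.

Definition subbrace_gen (a : A) : A -> Prop :=
  fun x => forall S, subbrace S -> S a -> S x.

End Brace.

Definition brace_hom (A1 A2 : zmodType) (mul1 : A1 -> A1 -> A1)
  (mul2 : A2 -> A2 -> A2) (f : A1 -> A2) : Prop :=
  (forall x y, f (x + y) = f x + f y) /\
  (forall x y, f (mul1 x y) = mul2 (f x) (f y)).

Definition binZ (n : int) (k : nat) : int :=
  ((\prod_(i < k) (n - i%:Z)) %/ (k`!)%:Z)%Z.

Definition Bm (m : nat) := {ffun 'I_m -> int}.

(* 0-indexed coordinate (0 outside range): coord v i = n_{i+1} *)
Definition coord (m : nat) (v : Bm m) (i : nat) : int :=
  if insub i is Some j then v j else 0.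

(* w_{i+1} = n_{i+1} + sum_{k=0}^{i} C(n_1,k) t_{i+1-k}  (0-indexed here) *)
Definition mulB (m : nat) (n t : Bm m) : Bm m :=
  [ffun i : 'I_m => n i + \sum_(k < (val i).+1)
       binZ (coord n 0) k * coord t (val i - k)].

Definition bvec (m : nat) : Bm m := [ffun i : 'I_m => if val i == 0%N then 1 else 0].

(* Main.v *)
Require Import Defs.
From mathcomp Require Import all_boot all_order all_algebra.
From HB Require Import structures.
From mathcomp Require Import ring.
Require Import Defs.
Set Implicit Arguments. Unset Strict Implicit. Unset Printing Implicit Defensive.
Import Order.TTheory GRing.Theory Num.Theory.
Local Open Scope ring_scope.

Lemma int_ind2 (P : int -> Prop) : P 0 -> (forall n, P n <-> P (n + 1)) -> forall n, P n.
Proof.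
move=> P0 HP [n|n].
  elim: n => // n IH; have -> : Posz n.+1 = Posz n + 1 by rewrite -addn1 PoszD.
  by apply (HP n).1.
rewrite NegzE; elim: n => [|n IH]; first by apply (HP (-1)).2; rewrite addNr.
apply (HP (- Posz n.+2)).2; have -> : - (Posz n.+2) + 1 = - Posz n.+1.
  by rewrite -[n.+2]addn1 PoszD opprD addrNK.
exact IH.
Qed.

Definition Fp (n : int) (k : nat) : int := \prod_(i < k) (n - i%:Z).

Lemma Fp_recl n k : Fp (n + 1) k.+1 = (n + 1) * Fp n k.
Proof.
rewrite /Fp big_ord_recl /= subr0; congr (_ * _); apply: eq_bigr => i _.
rewrite /bump /= add1n -addn1 PoszD; ring.
Qed.

Lemma Fp_recr n k : Fp n k.+1 = Fp n k * (n - k%:Z).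
Proof. by rewrite /Fp big_ord_recr. Qed.

Lemma Fp0k k : Fp 0 k.+1 = 0.
Proof. by rewrite /Fp big_ord_recl /= subr0 mul0r. Qed.

Lemma Fp_diff n k : Fp (n + 1) k.+1 - Fp n k.+1 = k.+1%:Z * Fp n k.
Proof. rewrite Fp_recl Fp_recr -[k.+1]addn1 PoszD; ring. Qed.

Lemma Fp_dvd n k : ((k`!)%:Z %| Fp n k)%Z.
Proof.
elim: k n => [|k IH] n; first by rewrite /Fp big_ord0.
have Hd : forall n, ((k.+1)`!%:Z %| k.+1%:Z * Fp n k)%Z.
  by move=> n'; rewrite factS PoszM dvdz_mul.
move: n; apply: int_ind2; first by rewrite Fp0k dvdz0.
move=> n; have := Fp_diff n k => /eqP; rewrite subr_eq => /eqP ->.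
split=> H; first by rewrite rpredD.
by rewrite -(rpredDl _ (Hd n)).
Qed.

Lemma binZ_Fp n k : binZ n k * (k`!)%:Z = Fp n k.
Proof. by rewrite /binZ divzK // Fp_dvd. Qed.

Lemma binZ0 n : binZ n 0 = 1.
Proof. by rewrite /binZ big_ord0 divz1. Qed.

Lemma binZ0k k : binZ 0 k.+1 = 0.
Proof. by rewrite /binZ -/(Fp 0 k.+1) Fp0k div0z. Qed.

Lemma binZS n k : binZ (n + 1) k.+1 = binZ n k.+1 + binZ n k.
Proof.
apply: (@mulIf _ ((k.+1)`!)%:Z); first by rewrite eqz_nat -lt0n fact_gt0.
rewrite mulrDl !binZ_Fp factS PoszM mulrA [binZ n k * _]mulrC -mulrA binZ_Fp.
rewrite Fp_recl Fp_recr -[k.+1]addn1 PoszD; ring.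
Qed.


Section Pow.
Variables (G : zmodType) (m' : nat) (D : {additive G -> G}).
Local Notation m := m'.+1.
Hypothesis Dnil : forall x, iter m D x = 0.

Lemma iterDB k : zmod_morphism (iter k D).
Proof. by elim: k => // k IH x y /=; rewrite IH raddfB. Qed.
Definition iD k : {additive G -> G} := HB.pack (iter k D) (GRing.isZmodMorphism.Build G G (iter k D) (iterDB k)).
Lemma iDE k x : iD k x = iter k D x. Proof. by []. Qed.

Definition Pw (n : int) (x : G) : G := \sum_(k < m) iter k D x *~ binZ n k.

Lemma PwB n : zmod_morphism (Pw n).
Proof.
move=> x y; rewrite /Pw -sumrB; apply: eq_bigr => k _.
by rewrite -!iDE raddfB mulrzBl.
Qed.
Definition PA n : {additive G -> G} := HB.pack (Pw n) (GRing.isZmodMorphism.Build G G (Pw n) (PwB n)).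
Lemma PAE n x : PA n x = Pw n x. Proof. by []. Qed.

Lemma Pw0 x : Pw 0 x = x.
Proof.
rewrite /Pw big_ord_recl /= binZ0 mulr1z big1 ?addr0 // => i _.
by rewrite binZ0k mulr0z.
Qed.

Lemma Pw_comm (h : {additive G -> G}) n x :
  (forall y, h (D y) = D (h y)) -> h (Pw n x) = Pw n (h x).
Proof.
move=> hD; rewrite /Pw raddf_sum; apply: eq_bigr => k _; rewrite raddfMz; congr (_ *~ _).
case: k => k _ /=; by elim: k => //= k IH; rewrite hD IH.
Qed.

Lemma Pw_D n x : D (Pw n x) = Pw n (D x).
Proof. exact: Pw_comm. Qed.

Lemma Pw_succ n x : Pw (n + 1) x = Pw n x + Pw n (D x).
Proof.
rewrite /Pw big_ord_recl /= binZ0.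
rewrite [X in _ = X + _]big_ord_recl /= binZ0 [X in _ = _ + X]big_ord_recr /=.
rewrite -[iter m' D (D x)]iterSr Dnil mul0rz addr0 -addrA; congr (_ + _).
rewrite -big_split /=; apply: eq_bigr => i _.
by rewrite binZS mulrzDr /bump /= add0n -iterS iterSr.
Qed.

Lemma Pw_commP a b x : Pw a (Pw b x) = Pw b (Pw a x).
Proof. rewrite -[Pw a (Pw b x)]PAE Pw_comm // => y; symmetry; exact: Pw_D. Qed.

Lemma Pw_addn a (p : nat) x : Pw (a + p%:Z) x = Pw a (Pw p x).
Proof.
elim: p x => [|p IH] x; first by rewrite addr0 Pw0.
rewrite -addn1 PoszD addrA !Pw_succ !IH -[Pw a (_ + _)]PAE raddfD.
by rewrite !PAE.
Qed.

Lemma Pw_add a b x : Pw (a + b) x = Pw a (Pw b x).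
Proof.
case: b => [p|p]; first exact: Pw_addn.
rewrite NegzE.
have inv : forall y, Pw (- p.+1%:Z) (Pw p.+1 y) = y.
  by move=> y; rewrite -Pw_addn addNr Pw0.
have H := Pw_addn (a - p.+1%:Z) p.+1.
have H' : forall y, Pw a y = Pw (a - p.+1%:Z) (Pw p.+1 y).
  by move=> y; rewrite -Pw_addn subrK.
by rewrite H' [Pw p.+1 _]Pw_commP inv.
Qed.

Definition Rw (n : int) (x : G) : G := \sum_(k < m') iter k D x *~ binZ n k.+1.

Lemma Pw_sub n x : Pw n x - x = D (Rw n x).
Proof.
rewrite /Pw /Rw big_ord_recl /= binZ0 mulr1z addrAC subrr add0r.
rewrite raddf_sum; apply: eq_bigr => i _.
by rewrite raddfMz /bump /= add1n.
Qed.

End Pow.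


Section BB.
Variable m' : nat.
Local Notation m := m'.+1.
Local Notation B := (Bm m).

Lemma coordE (v : B) (i : 'I_m) : coord v i = v i.
Proof. rewrite /coord; case: insubP => [j _ hj|]; [by rewrite (val_inj hj) | by rewrite ltn_ord]. Qed.

Lemma coord_out (v : B) j : (m <= j)%N -> coord v j = 0.
Proof. by move=> h; rewrite /coord insubF // ltnNge h. Qed.

Lemma coordB (x y : B) j : coord (x - y) j = coord x j - coord y j.
Proof.
case: (ltnP j m) => h; last by rewrite !coord_out // subr0.
by rewrite -[j]/(val (Ordinal h)) !coordE !ffunE.
Qed.

Definition Sh (t : B) : B := [ffun i : 'I_m => (if val i is j.+1 then coord t j else 0 : int)].

Lemma ShB : zmod_morphism Sh.
Proof. by move=> x y; apply/ffunP => i; rewrite !ffunE; case: (val i) => [|j]; rewrite ?subr0 ?coordB. Qed.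
Definition ShA : {additive B -> B} := HB.pack Sh (GRing.isZmodMorphism.Build B B Sh ShB).

Lemma iterSh k t (i : 'I_m) : iter k ShA t i = if (k <= i)%N then coord t (i - k) else 0.
Proof.
elim: k i => [|k IH] i; first by rewrite subn0 coordE.
rewrite /= /Sh ffunE; case: i => [[|j] hj] //=.
have hj' : (j < m)%N by apply: ltnW.
by rewrite -[j]/(val (Ordinal hj')) coordE IH /= ltnS subSS.
Qed.

Lemma Sh_nil t : iter m ShA t = 0.
Proof. by apply/ffunP => i; rewrite iterSh ffunE leqNgt ltn_ord. Qed.

Definition phi (x : B) : int := coord x 0.

Lemma phiB x y : phi (x - y) = phi x - phi y.
Proof. exact: coordB. Qed.

Lemma phi_Sh t : phi (ShA t) = 0.
Proof. by rewrite /phi -[0%N]/(val (ord0 : 'I_m)) coordE /= /Sh ffunE. Qed.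

Lemma phi_Pw c t : phi (Pw m' ShA c t) = phi t.
Proof.
have := Pw_sub m' ShA c t => /(congr1 phi); rewrite phiB phi_Sh => /eqP.
by rewrite subr_eq0 => /eqP.
Qed.

Lemma mulBE n t : mulB n t = n + Pw m' ShA (phi n) t.
Proof.
apply/ffunP => i; rewrite !ffunE sum_ffunE; congr (_ + _).
rewrite (big_ord_widen m (fun k => binZ (coord n 0) k * coord t (i - k))) //.
rewrite big_mkcond /=; apply: eq_bigr => k _.
rewrite ffunMzE iterSh ltnS mulrzz mulrC.
  by case: ifP => _ //; rewrite mul0r.
exact: ltn_ord.
Qed.


Lemma coordD (x y : B) j : coord (x + y) j = coord x j + coord y j.
Proof.
case: (ltnP j m) => h; last by rewrite !coord_out // addr0.
by rewrite -[j]/(val (Ordinal h)) !coordE !ffunE.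
Qed.
Lemma phiD x y : phi (x + y) = phi x + phi y. Proof. exact: coordD. Qed.
Lemma phi0 : phi 0 = 0. Proof. by rewrite /phi -[0%N]/(val (ord0 : 'I_m)) coordE ffunE. Qed.
Lemma phiN x : phi (- x) = - phi x.
Proof. by rewrite -sub0r phiB phi0 sub0r. Qed.

Local Notation P := (Pw m' ShA).
Lemma PD c x y : P c (x + y) = P c x + P c y.
Proof. by rewrite -!PAE raddfD. Qed.
Lemma PN c x : P c (- x) = - P c x.
Proof. by rewrite -!PAE raddfN. Qed.
Lemma P0 c : P c 0 = 0.
Proof. by rewrite -!PAE raddf0. Qed.

Lemma phi_mul (n t : B) : phi (mulB n t) = phi n + phi t.
Proof. by rewrite mulBE phiD phi_Pw. Qed.

Definition Binv (x : B) : B := - P (- phi x) x.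

Lemma Binv_r x : mulB x (Binv x) = 0.
Proof.
by rewrite mulBE /Binv PN -Pw_add ?subrr ?Pw0 ?subrr //; exact: Sh_nil.
Qed.

Lemma phi_Binv x : phi (Binv x) = - phi x.
Proof. by rewrite /Binv phiN phi_Pw. Qed.

Lemma Binv_l x : mulB (Binv x) x = 0.
Proof. by rewrite mulBE phi_Binv /Binv addNr. Qed.

Lemma mulB0l (x : B) : mulB 0 x = x.
Proof. by rewrite mulBE phi0 Pw0 add0r. Qed.
Lemma mulB0r (x : B) : mulB x 0 = x.
Proof. by rewrite mulBE P0 addr0. Qed.

Lemma mulBA (x y z : B) : mulB x (mulB y z) = mulB (mulB x y) z.
Proof.
rewrite !mulBE phiD phi_Pw PD Pw_add ?addrA //; exact: Sh_nil.
Qed.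

Lemma B_brace : is_left_brace (@mulB m).
Proof.
split; first exact: mulBA.
split; last by move=> a b c; rewrite !mulBE PD [a + _ - a]addrAC subrr add0r addrCA.
exists 0; split; first by move=> x; rewrite mulB0l mulB0r.
by move=> x; exists (Binv x); rewrite Binv_r Binv_l.
Qed.

Lemma bstarB (l w : B) : bstar (@mulB m) l w = ShA (Rw m' ShA (phi l) w).
Proof. by rewrite /bstar mulBE addrA addNr add0r Pw_sub. Qed.

End BB.
Definition ShF m' (t : Bm m'.+1) := Sh t.


Section Sub.
Variables (A : zmodType) (S : A -> Prop) (hS : add_subgroup S).
Lemma as_0 : S 0. Proof. by case: hS. Qed.
Lemma as_N x : S x -> S (- x).
Proof. by case: hS => h0 hB hx; rewrite -sub0r; apply: hB. Qed.
Lemma as_B x y : S x -> S y -> S (x - y).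
Proof. by case: hS => h0 hB; apply: hB. Qed.
Lemma as_D x y : S x -> S y -> S (x + y).
Proof. by move=> hx hy; rewrite -[y]opprK; apply: as_B => //; apply: as_N. Qed.
Lemma as_Mz x z : S x -> S (x *~ z).
Proof.
move=> hx; have hn : forall n, S (x *+ n).
  by elim=> [|n IH]; [rewrite mulr0n; exact: as_0 | rewrite mulrS; exact: as_D].
case: z => n; first exact: hn.
by rewrite NegzE mulrNz; apply: as_N; exact: hn.
Qed.
Lemma as_sum (I : Type) (r : seq I) (F : I -> A) : (forall i, S (F i)) -> S (\sum_(i <- r) F i).
Proof. by move=> h; elim/big_rec: _ => [|i x _ hx]; [exact: as_0 | exact: as_D]. Qed.
End Sub.

Lemma star_sub (A : zmodType) (mul : A -> A -> A) L M : add_subgroup (star_set mul L M).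
Proof.
split; first by move=> S [h0 _].
by move=> x y hx hy S hS hg; apply: (as_B hS); [apply: hx | apply: hy].
Qed.

Lemma star_gen (A : zmodType) (mul : A -> A -> A) (L M : A -> Prop) l w :
  L l -> M w -> star_set mul L M (bstar mul l w).
Proof. by move=> hl hw S _ hg; apply: hg. Qed.

Section BB2.
Variable m' : nat.
Local Notation m := m'.+1.
Local Notation B := (Bm m).
Local Notation P := (Pw m' (ShA m')).
Local Notation Sh := (ShA m').

Lemma phi_bvec : phi (bvec m) = 1.
Proof. by rewrite /phi -[0%N]/(val (ord0 : 'I_m)) coordE ffunE. Qed.

Lemma bstar_bvec w : bstar (@mulB m) (bvec m) w = Sh w.
Proof.
rewrite /bstar mulBE addrA addNr add0r phi_bvec -[1]add0r Pw_succ; last exact: Sh_nil.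
by rewrite !Pw0 addrC addKr.
Qed.

Lemma derived_B : is_zero_set (derived (@mulB m) 3).
Proof.
move=> x; split; last by move=> ->; apply: as_0; apply: star_sub.
move=> hx; apply: (hx (fun x => x = 0)).
  by split => // x0 y0 -> ->; rewrite subrr.
move=> l w hl _.
have hp : phi l = 0.
  apply: (hl (fun x => phi x = 0)).
    by split; [exact: phi0 | move=> x0 y0 h1 h2; rewrite phiB h1 h2 subrr].
  by move=> l' w' _ _; rewrite bstarB phi_Sh.
by rewrite /bstar mulBE hp Pw0 addrA addNr add0r subrr.
Qed.

Definition Zk k (x : B) := forall j : 'I_m, (j < k)%N -> x j = 0.

Lemma Zk_sub k : add_subgroup (Zk k).
Proof.
split; first by move=> j _; rewrite ffunE.
by move=> x y hx hy j hj; rewrite ffunE !ffunE hx // hy // subrr.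
Qed.

Lemma Zk_Sh k x : Zk k x -> Zk k.+1 (Sh x).
Proof.
move=> hx [[|j] hj] /= hk; rewrite /= /Sh ffunE //=.
have hj' : (j < m)%N by apply: ltnW.
by rewrite -[j]/(val (Ordinal hj')) coordE hx.
Qed.

Lemma Zk_S k x : Zk k.+1 x -> Zk k x.
Proof. by move=> hx j hj; apply: hx; apply: ltnW. Qed.

Lemma Zk_iter k i x : Zk k x -> Zk k (iter i Sh x).
Proof. by move=> hx; elim: i => //= i IH; apply: Zk_S; apply: Zk_Sh. Qed.

Lemma Zk_Rw k c x : Zk k x -> Zk k (Rw m' Sh c x).
Proof.
move=> hx; apply: (as_sum (Zk_sub k)) => i; apply: (as_Mz (Zk_sub k)).
exact: Zk_iter.
Qed.

Lemma power_Zk k x : power_aux (@mulB m) k x -> Zk k x.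
Proof.
elim: k x => [|k IH] x; first by move=> _ j.
move=> hx; apply: (hx (Zk k.+1)); first exact: Zk_sub.
by move=> l w _ hw; rewrite bstarB; apply: Zk_Sh; apply: Zk_Rw; apply: IH.
Qed.

Lemma power_B : is_zero_set (bpower (@mulB m) m.+1).
Proof.
move=> x; split; last by move=> ->; apply: as_0; apply: star_sub.
move=> /power_Zk hx; apply/ffunP => j; rewrite ffunE; apply: hx; exact: ltn_ord.
Qed.

Definition ei i : B := iter i Sh (bvec m).

Lemma power_ei k : power_aux (@mulB m) k (ei k).
Proof.
elim: k => // k IH; rewrite /ei iterS -bstar_bvec; exact: star_gen.
Qed.

Lemma eiE i (j : 'I_m) : ei i j = if (i == j :> nat) then 1 else 0.
Proof.
rewrite /ei iterSh.
have hj : (j - i < m)%N by apply: leq_ltn_trans (leq_subr i j) (ltn_ord j).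
rewrite -[(j - i)%N]/(val (Ordinal hj)) coordE ffunE /=.
case: (ltngtP i j) => h.
- by rewrite subn_eq0 leqNgt h.
- by [].
- by rewrite h subnn.
Qed.

Lemma not_power_B : ~ is_zero_set (bpower (@mulB m) m).
Proof.
move=> h; have := power_ei m'; rewrite /bpower /= => /h /ffunP /(_ ord_max).
by rewrite eiE eqxx ffunE.
Qed.

Lemma decompB (x : B) : x = \sum_(i < m) ei i *~ x i.
Proof.
apply/ffunP => j; rewrite sum_ffunE (bigD1 j) //= big1 ?addr0.
  by rewrite ffunMzE eiE eqxx mulrzz mul1r.
move=> i hij; rewrite ffunMzE eiE.
by rewrite (inj_eq val_inj) (negbTE hij) mul0rz.
Qed.


Lemma subbrace_closed (S : B -> Prop) : subbrace (@mulB m) S ->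
  forall l w, S l -> S w -> S (bstar (@mulB m) l w).
Proof.
move=> [hadd [_ [hmul _]]] l w hl hw; rewrite /bstar.
apply: (as_B hadd) => //; apply: (as_D hadd); first exact: (as_N hadd).
exact: hmul.
Qed.

Lemma gen_B x : subbrace_gen (@mulB m) (bvec m) x.
Proof.
move=> S hS hb; have hadd := hS.1.
rewrite (decompB x); apply: (as_sum hadd) => i; apply: (as_Mz hadd).
elim: (nat_of_ord i) => // k IH.
by rewrite /ei iterS -bstar_bvec; apply: subbrace_closed.
Qed.
End BB2.


Lemma add_zmod (U V : zmodType) (f : U -> V) :
  (forall x y, f (x + y) = f x + f y) -> zmod_morphism f.
Proof. by move=> h x y; have := h (x - y) y; rewrite subrK => ->; rewrite addrK. Qed.

Section AA.
Variables (A : zmodType) (mulA : A -> A -> A) (hbr : is_left_brace mulA).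

Definition lam x y := - x + mulA x y.
Lemma mulA_lam x y : mulA x y = x + lam x y. Proof. by rewrite /lam addNKr. Qed.
Lemma lamD x y z : lam x (y + z) = lam x y + lam x z.
Proof.
case: hbr => _ [_ hd]; rewrite /lam hd.
by rewrite -!addrA; congr (_ + _); rewrite addrA addrC.
Qed.
Lemma lamB x : zmod_morphism (lam x). Proof. apply: add_zmod; exact: lamD. Qed.
Definition lamA x : {additive A -> A} := HB.pack (lam x) (GRing.isZmodMorphism.Build A A (lam x) (lamB x)).

Lemma mulA0 x : mulA x 0 = x.
Proof.
have h := lamD x 0 0; rewrite addr0 in h.
have := congr1 (fun z => z - lam x 0) h; rewrite /= subrr addrK /lam => /eqP.
by rewrite eq_sym addrC subr_eq0 => /eqP.
Qed.

Lemma e0 : exists2 e, e = 0 & forall x, exists y, mulA x y = e /\ mulA y x = e.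
Proof.
case: hbr => _ [[e [he hinv]] _]; exists e => //.
by have [h1 _] := he 0; rewrite mulA0 in h1.
Qed.

Lemma mul0A x : mulA 0 x = x.
Proof.
case: hbr => _ [[e [he _]] _]; have [h1 _] := he 0; rewrite mulA0 in h1.
by rewrite -h1; case: (he x).
Qed.

Lemma ainv x : exists y, mulA x y = 0 /\ mulA y x = 0.
Proof. by case: e0 => e -> h; apply: h. Qed.

Lemma lam0 y : lam 0 y = y. Proof. by rewrite /lam mul0A oppr0 add0r. Qed.

Lemma lam_mul x y w : lam (mulA x y) w = lam x (lam y w).
Proof.
case: hbr => hA _.
have E1 : mulA x (mulA y w) = mulA x y + lam x (lam y w).
  by rewrite [mulA y w]mulA_lam mulA_lam lamD addrA -mulA_lam.
by rewrite {1}/lam -hA E1 addKr.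
Qed.

Lemma bstarA x y : bstar mulA x y = lam x y - y. Proof. by []. Qed.

Definition A2 := star_set mulA (@whole A) (@whole A).

Lemma A2_sub : add_subgroup A2. Proof. exact: star_sub. Qed.
Lemma A2_gen x y : A2 (bstar mulA x y). Proof. exact: star_gen. Qed.

Hypothesis hd3 : is_zero_set (derived mulA 3).

Lemma lam_A2_id l w : A2 l -> lam l w = w.
Proof.
move=> hl; have : derived mulA 3 (bstar mulA l w) by apply: star_gen.
by move/hd3; rewrite bstarA => /eqP; rewrite subr_eq0 => /eqP.
Qed.

Lemma lam_A2 z y : A2 y -> A2 (lam z y).
Proof.
move=> hy; apply: (hy (fun y => A2 (lam z y))).
  split; first by rewrite -[lam z 0]/(lamA z 0) raddf0; exact: (as_0 A2_sub).
  move=> x0 y0 h1 h2; rewrite -[lam z _]/(lamA z _) raddfB.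
  exact: (as_B A2_sub).
move=> b c _ _; rewrite bstarA -[lam z _]/(lamA z _) raddfB /=.
have -> : lam z (lam b c) - lam z c = bstar mulA (mulA z b) c - bstar mulA z c.
  by rewrite !bstarA lam_mul opprB addrA subrK.
by apply: (as_B A2_sub); apply: A2_gen.
Qed.

Lemma lam_addA2 x y w : A2 y -> lam (x + y) w = lam x w.
Proof.
move=> hy; have [x' [h1 h2]] := ainv x.
have -> : x + y = mulA x (lam x' y) by rewrite mulA_lam -lam_mul h1 lam0.
by rewrite lam_mul (lam_A2_id (l := lam x' y)) //; apply: lam_A2.
Qed.

End AA.


Section AA2.
Variables (A : zmodType) (mulA : A -> A -> A) (hbr : is_left_brace mulA).
Variable m' : nat.
Local Notation m := m'.+1.
Hypothesis hd3 : is_zero_set (derived mulA 3).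
Hypothesis hp : is_zero_set (bpower mulA m.+1).
Variable a : A.

Definition Df y := bstar mulA a y.
Lemma DfB : zmod_morphism Df.
Proof.
apply: add_zmod => x y; rewrite /Df !bstarA lamD // opprD.
by rewrite addrACA.
Qed.
Definition DA : {additive A -> A} := HB.pack Df (GRing.isZmodMorphism.Build A A Df DfB).

Lemma DA_pow k y : power_aux mulA k (iter k DA y).
Proof. by elim: k => // k IH; rewrite iterS; apply: star_gen. Qed.

Lemma DA_nil y : iter m DA y = 0.
Proof. by apply/hp; apply: DA_pow. Qed.

Lemma DA_A2 y : A2 mulA (DA y).
Proof. exact: A2_gen. Qed.

Local Notation PD := (Pw m' DA).

Lemma lam_a w : lam mulA a w = w + DA w.
Proof. by rewrite -[DA w]/(Df w) /Df bstarA addrC subrK. Qed.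

Lemma lam_xa x w : lam mulA (x + a) w = lam mulA x (w + DA w).
Proof.
have E : mulA x a = (x + a) + bstar mulA x a.
  by rewrite (mulA_lam mulA x a) bstarA -addrA (addrCA a) subrr addr0.
rewrite -(lam_a w) -(lam_mul hbr) -(lam_addA2 hbr hd3 (x + a) w (@A2_gen _ mulA x a)).
by rewrite -E.
Qed.

Lemma lam_pow z : forall w, lam mulA (a *~ z) w = PD z w.
Proof.
elim/int_ind2: z.
  by move=> w; rewrite mulr0z lam0 // Pw0.
move=> z; rewrite mulrzDr mulr1z; split=> IH w.
  by rewrite lam_xa IH -[PD z (w + _)]/(PA m' DA z _) raddfD /= -Pw_succ //; exact: DA_nil.
pose v := PD (-1) w.
have hv : v + DA v = w.
  by rewrite /v Pw_D -Pw_succ ?addNr ?Pw0 //; exact: DA_nil.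
rewrite -hv -lam_xa IH Pw_succ; last exact: DA_nil.
by rewrite -[PD z (v + _)]/(PA m' DA z _) raddfD.
Qed.

End AA2.


Section AA3.
Variables (A : zmodType) (mulA : A -> A -> A) (hbr : is_left_brace mulA).
Variable m' : nat.
Local Notation m := m'.+1.
Local Notation B := (Bm m).
Hypothesis hd3 : is_zero_set (derived mulA 3).
Hypothesis hp : is_zero_set (bpower mulA m.+1).
Variable a : A.
Local Notation D := (DA hbr a).
Local Notation Sh := (ShA m').

Definition fF (x : B) : A := \sum_(i < m) iter i D a *~ x i.

Lemma fB : zmod_morphism fF.
Proof. by move=> x y; rewrite /fF -sumrB; apply: eq_bigr => i _; rewrite !ffunE mulrzBr. Qed.
Definition fA : {additive B -> A} := HB.pack fF (GRing.isZmodMorphism.Build B A fF fB).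

Lemma f_Sh t : fF (Sh t) = D (fF t).
Proof.
rewrite /fF raddf_sum [in RHS]big_ord_recr.
have -> : D (iter (@ord_max m') D a *~ t ord_max) = 0.
  by rewrite raddfMz -iterS (DA_nil hbr hp) mul0rz.
rewrite Monoid.mulm1.
have hS0 : (Sh t) ord0 = 0 by rewrite -[Sh t]/(ShF t) ffunE.
rewrite big_ord_recl hS0 mulr0z add0r; apply: eq_bigr => i _.
rewrite raddfMz; congr (_ *~ _).
rewrite -[Sh t]/(ShF t) ffunE /=.
by rewrite -[nat_of_ord i]/(val (widen_ord (leqnSn m') i)) coordE.
Qed.

Lemma f_iter k t : fF (iter k Sh t) = iter k D (fF t).
Proof. by elim: k => // k IH; rewrite !iterS f_Sh IH. Qed.

Lemma f_P c t : fF (Pw m' Sh c t) = Pw m' D c (fF t).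
Proof.
rewrite -[fF _]/(fA _) /Pw raddf_sum; apply: eq_bigr => k _.
by rewrite raddfMz /= f_iter.
Qed.

Lemma f_split n : exists2 y, A2 mulA y & fF n = a *~ phi n + y.
Proof.
exists (\sum_(i < m') iter i.+1 D a *~ n (lift ord0 i)).
  apply: (as_sum (A2_sub mulA)) => i; apply: (as_Mz (A2_sub mulA)).
  rewrite iterS; exact: DA_A2.
by rewrite /fF big_ord_recl /phi -[0%N]/(val (ord0 : 'I_m)) coordE.
Qed.

Lemma lam_f n w : lam mulA (fF n) w = Pw m' D (phi n) w.
Proof.
have [y hy ->] := f_split n.
by rewrite (lam_addA2 hbr hd3 _ _ hy) (lam_pow hbr hd3 hp).
Qed.

Lemma f_mul n t : fF (mulB n t) = mulA (fF n) (fF t).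
Proof.
rewrite mulBE -[fF _]/(fA _) raddfD -[fA (Pw _ _ _ _)]/(fF _) f_P (mulA_lam mulA) lam_f.
by [].
Qed.

Lemma f_bvec : fF (bvec m) = a.
Proof.
rewrite /fF big_ord_recl big1 ?addr0 /=; first by rewrite ffunE /= mulr1z.
by move=> i _; rewrite ffunE /= mulr0z.
Qed.

Lemma f_ei i : fF (ei m' i) = iter i D a.
Proof. by rewrite /ei f_iter f_bvec. Qed.

Lemma f_hom : brace_hom (@mulB m) mulA fF.
Proof. by split; [move=> x y; rewrite -[fF _]/(fA _) raddfD | exact: f_mul]. Qed.

Lemma f_unique (g : B -> A) : brace_hom (@mulB m) mulA g -> g (bvec m) = a ->
  forall x, g x = fF x.
Proof.
move=> [gD gM] gb.
pose gA : {additive B -> A} := HB.pack g (GRing.isZmodMorphism.Build B A g (add_zmod gD)).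
have gbs : forall l w, g (bstar (@mulB m) l w) = bstar mulA (g l) (g w).
  by move=> l w; rewrite /bstar -[g _]/(gA _) raddfB raddfD raddfN /= gM.
have gei : forall i, g (ei m' i) = iter i D a.
  elim=> // i IH; rewrite /ei iterS -bstar_bvec gbs gb -/(ei m' i) IH //.
move=> x; rewrite (decompB x) -[g _]/(gA _) -[fF _]/(fA _) !raddf_sum.
by apply: eq_bigr => i _; rewrite !raddfMz /= gei f_ei.
Qed.

Lemma f_image y : (exists x, fF x = y) <-> subbrace_gen mulA a y.
Proof.
split.
  move=> [x <-] S [hadd [_ [hmul _]]] ha.
  apply: (as_sum hadd) => i; apply: (as_Mz hadd).
  elim: (nat_of_ord i) => // k IH; rewrite iterS /= /Df /bstar.
  apply: (as_B hadd) => //; apply: (as_D hadd); first exact: (as_N hadd).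
  exact: hmul.
move=> hy; apply: (hy (fun y => exists x, fF x = y)); last by exists (bvec m); exact: f_bvec.
split.
  split; first by exists 0; rewrite -[fF _]/(fA _) raddf0.
  by move=> _ _ [x <-] [x' <-]; exists (x - x'); rewrite -[fF _]/(fA _) raddfB.
split.
  exists 0; split; last by exists 0; rewrite -[fF _]/(fA _) raddf0.
  by move=> x; rewrite (mul0A hbr) mulA0.
split; first by move=> _ _ [x <-] [x' <-]; exists (mulB x x'); exact: f_mul.
move=> _ [x <-]; exists (fF (Binv x)); split; first by exists (Binv x).
rewrite -!f_mul Binv_r Binv_l -[fF 0]/(fA 0) raddf0.
by split => z; rewrite (mul0A hbr) mulA0.
Qed.

End AA3.


Theorem theoremE (m : nat) (hm : (2 <= m)%N) :
  is_left_brace (@mulB m) /\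
  is_zero_set (derived (@mulB m) 3) /\
  is_zero_set (bpower (@mulB m) m.+1) /\
  ~ is_zero_set (bpower (@mulB m) m) /\
  (forall x : Bm m, subbrace_gen (@mulB m) (bvec m) x) /\
  (forall (A : zmodType) (mulA : A -> A -> A),
     is_left_brace mulA ->
     is_zero_set (derived mulA 3) -> is_zero_set (bpower mulA m.+1) ->
     forall a : A,
       exists f : Bm m -> A,
         (brace_hom (@mulB m) mulA f /\ f (bvec m) = a) /\
         (forall g : Bm m -> A, brace_hom (@mulB m) mulA g -> g (bvec m) = a ->
            forall x, g x = f x) /\
         (forall y, (exists x, f x = y) <-> subbrace_gen mulA a y)).
Proof.
case: m hm => [//|m'] hm.
split; first exact: B_brace.
split; first exact: derived_B.
split; first exact: power_B.
split; first exact: not_power_B.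
split; first exact: gen_B.
move=> A mulA hbr hd3 hp a; exists (fF hbr a); split.
  by split; [exact: f_hom | exact: f_bvec].
split; first exact: f_unique.
exact: f_image.
Qed.
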